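(* Fix $k$. For $j\ge1$ let $$\Delta_j(m)=(-1)^j\big[2^j\psi^{(j-1)}(2m+1)-\psi^{(j-1)}(m+1+k)-\psi^{(j-1)}(m+1-k)\big],$$ and define $x_0(m)=1$, $x_1(m)=0$, and $x_j(m)=\sum_{l=0}^{j-2}\binom{j-1}{l}\Delta_{j-l}(m)x_l(m)$ for $j\ge2$. Then for every $j\in\mathbb{N}$, $$\frac{d\Delta_j}{dm}=-\Delta_{j+1}\qquad\text{and}\qquad\frac{dx_j}{dm}=-x_{j+1}+j\,\Delta_2\,x_{j-1}.$$
   Context: $\psi^{(n)}(z)=\frac{d^{n+1}}{dz^{n+1}}\log\Gamma(z)$ is the polygamma function. The identities are for values of $m$ where none of $2m+1$, $m+1+k$, $m+1-k$ is a non-positive integer. *)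

(* Defs.v *)
From Stdlib Require Import Reals List Factorial.
From Coquelicot Require Import Coquelicot.
Open Scope R_scope.

(* Euler's Gamma function on the reals, via Gauss's limit formula
   Gamma(z) = lim_n n! n^z / (z (z+1) ... (z+n)),
   valid for every real z that is not a non-positive integer. *)
Definition Gamma (z : R) : R :=
  real (Lim_seq (fun n : nat =>
     INR (fact n) * Rpower (INR n) z / prod_f_R0 (fun i => z + INR i) n)).

(* Polygamma: psi^(n)(z) = d^(n+1)/dz^(n+1) log Gamma(z).
   On the reals we use log|Gamma| (equal to log Gamma where Gamma > 0;
   all its derivatives of order >= 1 coincide with those of log Gamma). *)
Definition polygamma (n : nat) (z : R) : R :=
  Derive_n (fun t => ln (Rabs (Gamma t))) (S n) z.

Definition Dlt (k : R) (j : nat) (m : R) : R :=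
  (-1) ^ j * (2 ^ j * polygamma (j - 1) (2 * m + 1)
              - polygamma (j - 1) (m + 1 + k)
              - polygamma (j - 1) (m + 1 - k)).

Definition xnext (k : R) (j : nat) (m : R) (L : list R) : R :=
  match j with
  | 0%nat => 1
  | 1%nat => 0
  | S (S j') => sum_f_R0 (fun l => Binomial.C (S j') l * Dlt k (j - l) m * nth l L 0) j'
  end.

Fixpoint xs (k : R) (n : nat) (m : R) : list R :=
  match n with
  | 0%nat => 1 :: nil
  | S n' => let L := xs k n' m in L ++ (xnext k n m L :: nil)
  end.

Definition xseq (k : R) (j : nat) (m : R) : R := nth j (xs k j m) 0.

Definition admissible (k m : R) : Prop :=
  forall n : nat, 2 * m + 1 <> - INR n /\ m + 1 + k <> - INR n /\ m + 1 - k <> - INR n.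

(* Main.v *)
Require Import Defs.
From Stdlib Require Import Reals Ranalysis5 Lra Lia Psatz Factorial List.
From Coquelicot Require Import Coquelicot.
Open Scope R_scope.


Definition U (y : R) : Prop := forall n : nat, y <> - INR n.

Lemma fin_min (x : R) : U x -> forall N, exists d, 0 < d /\ forall i, (i < N)%nat -> d <= Rabs (x + INR i).
Proof.
  intros Hx N; induction N as [|N [d [Hd H]]].
  - exists 1; split; [lra|intros i Hi; lia].
  - assert (HN : x + INR N <> 0) by (intro E; apply (Hx N); lra).
    exists (Rmin d (Rabs (x + INR N))); split.
    + apply Rmin_glb_lt; [lra| apply Rabs_pos_lt; auto].
    + intros i Hi. destruct (Nat.eq_dec i N) as [->|Hne].
      * apply Rmin_r.
      * eapply Rle_trans; [apply Rmin_l| apply H; lia].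
Qed.

Lemma all_min (x : R) : U x -> exists d, 0 < d /\ forall i, d <= Rabs (x + INR i).
Proof.
  intros Hx. destruct (INR_unbounded (1 - x)) as [N HN].
  destruct (fin_min x Hx N) as [d [Hd H]].
  exists (Rmin d 1); split; [apply Rmin_glb_lt; lra|].
  intros i. destruct (Nat.lt_ge_cases i N) as [Hi|Hi].
  - eapply Rle_trans; [apply Rmin_l| apply H; lia].
  - eapply Rle_trans; [apply Rmin_r|].
    assert (INR N <= INR i) by (apply le_INR; lia).
    rewrite Rabs_pos_eq; lra.
Qed.

Lemma geom (x : R) : U x -> exists rho c M, 0 < rho /\ 0 < c /\ 0 < M /\
  forall y, Rabs (y - x) < rho -> Rabs y <= M /\ forall i, c * (INR i + 1) <= Rabs (y + INR i).
Proof.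
  intros Hx. destruct (all_min x Hx) as [d [Hd H]].
  set (M := Rabs x + d).
  assert (HM : 0 < M) by (unfold M; pose proof (Rabs_pos x); lra).
  exists (d/2), (Rmin (d / (4 * M + 4)) (1/4)), M.
  split; [lra|]. split; [apply Rmin_glb_lt; [apply Rdiv_lt_0_compat; lra|lra]|].
  split; [exact HM|].
  intros y Hy.
  assert (HyM : Rabs y <= M).
  { unfold M. replace y with (x + (y - x)) by ring.
    eapply Rle_trans; [apply Rabs_triang|]. lra. }
  split; [exact HyM|].
  intros i. pose proof (H i) as Hi.
  assert (Hyi : d/2 <= Rabs (y + INR i)).
  { pose proof (Rabs_triang (y + INR i) (- (y - x))) as T. rewrite Rabs_Ropp in T.
    replace (y + INR i + - (y - x)) with (x + INR i) in T by ring. lra. }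
  pose proof (pos_INR i) as Hi0.
  destruct (Rle_lt_dec (INR i + 1) (2 * M + 2)) as [Hc|Hc].
  - eapply Rle_trans; [apply Rmult_le_compat_r; [lra| apply Rmin_l]|].
    apply Rle_trans with (d / 2); [|exact Hyi].
    apply Rle_trans with (d / (4 * M + 4) * (2 * M + 2)).
    + apply Rmult_le_compat_l; [|lra]. apply Rlt_le, Rdiv_lt_0_compat; lra.
    + right; field; lra.
  - eapply Rle_trans; [apply Rmult_le_compat_r; [lra| apply Rmin_r]|].
    assert (Rabs (y + INR i) >= INR i - Rabs y).
    { pose proof (Rabs_triang (y + INR i) (-y)) as T. rewrite Rabs_Ropp in T.
      replace (y + INR i + - y) with (INR i) in T by ring.
      rewrite Rabs_pos_eq in T by lra. lra. }
    lra.
Qed.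



Lemma sign_inv (z : R) : z <> 0 -> sign z * / Rabs z = / z.
Proof.
  intros H. unfold sign. destruct (total_order_T 0 z) as [[h|h]|h].
  - rewrite Rabs_pos_eq by lra. ring.
  - lra.
  - rewrite Rabs_left by lra. field. lra.
Qed.

Lemma der_lnabs (a y : R) : y + a <> 0 ->
  is_derive (fun y => ln (Rabs (y + a))) y (/ (y + a)).
Proof.
  intros H.
  assert (D1 : is_derive (fun y => Rabs (y + a)) y (sign (y + a) * 1)).
  { apply (is_derive_Rabs (fun y => y + a)); [|exact H].
    auto_derive; auto. }
  assert (D2 : is_derive ln (Rabs (y + a)) (/ Rabs (y + a))).
  { apply is_derive_ln. apply Rabs_pos_lt; auto. }
  pose proof (is_derive_comp ln (fun y => Rabs (y + a)) y _ _ D2 D1) as D.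
  replace (/ (y + a)) with (scal (sign (y + a) * 1) (/ Rabs (y + a))); [exact D|].
  rewrite <- (sign_inv (y + a) H). unfold scal; simpl; unfold mult; simpl. ring.
Qed.

Lemma isd_minus (f g : R -> R) x a b : is_derive f x a -> is_derive g x b ->
  is_derive (fun z => f z - g z) x (a - b).
Proof. intros. apply (is_derive_minus f g); auto. Qed.
Lemma isd_plus (f g : R -> R) x a b : is_derive f x a -> is_derive g x b ->
  is_derive (fun z => f z + g z) x (a + b).
Proof. intros. apply (is_derive_plus f g); auto. Qed.

Definition t (r i : nat) (y : R) : R :=
  match r with
  | 0%nat => match i with
         | 0%nat => - ln (Rabs y)
         | _ => ln (INR i) + y * ln (1 + / INR i) - ln (Rabs (y + INR i))
         end
  | 1%nat => match i with
         | 0%nat => - / y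
         | _ => ln (1 + / INR i) - / (y + INR i)
         end
  | S r' => (-1) ^ r * INR (fact r') / (y + INR i) ^ r
  end.

Lemma t_der (r i : nat) (y : R) : U y -> is_derive (t r i) y (t (S r) i y).
Proof.
  intros Hy. assert (Hi : y + INR i <> 0) by (intro E; apply (Hy i); lra).
  destruct r as [|[|r]].
  - destruct i as [|i].
    + simpl in Hi.
      apply (is_derive_ext (fun z => opp (ln (Rabs (z + 0))))).
      { intros z. simpl. rewrite Rplus_0_r. reflexivity. }
      replace (t 1 0 y) with (opp (/ (y + 0))).
      2: { simpl. rewrite Rplus_0_r. reflexivity. }
      apply (is_derive_opp (fun z : R => ln (Rabs (z + 0)))). apply der_lnabs; auto.
    + unfold t. remember (INR (S i)) as n.
      replace (ln (1 + / n) - / (y + n)) with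
        (0 + ln (1 + / n) * 1 - / (y + n)) by ring.
      apply (isd_minus (fun z => ln n + z * ln (1 + / n))
                (fun z => ln (Rabs (z + n)))).
      * auto_derive; auto. ring.
      * apply der_lnabs; auto.
  - destruct i as [|i].
    + change (is_derive (fun z => - / z) y ((-1)^2 * INR (fact 1) / (y + INR 0)^2)).
      simpl in Hi. rewrite Rplus_0_r in Hi.
      auto_derive; auto. simpl. field; auto.
    + unfold t. remember (INR (S i)) as n. auto_derive; auto. simpl. field; auto.
  - unfold t. remember (INR i) as n. auto_derive. { intro E. apply (pow_nonzero (y+n) (S (S r))); auto. }
    change (match r with 0%nat => 1 | S _ => INR r + 1 end) with (INR (S r)).
    rewrite plus_INR, mult_INR, S_INR. simpl.
    assert ((y + n) ^ r <> 0) by (apply pow_nonzero; auto).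
    repeat (rewrite plus_INR || rewrite mult_INR). field. auto.
Qed.


Lemma ln_le_m1 x : 0 < x -> ln x <= x - 1.
Proof. intros H. pose proof (exp_ineq1_le (ln x)). rewrite exp_ln in H0; lra. Qed.

Lemma ln_ge_m1 x : 0 < x -> 1 - / x <= ln x.
Proof.
  intros H. pose proof (ln_le_m1 (/ x) (Rinv_0_lt_compat _ H)).
  rewrite ln_Rinv in H0; lra.
Qed.

Lemma ln_mono x y : 0 < x -> x <= y -> ln x <= ln y.
Proof.
  intros H [h|h]. apply Rlt_le, ln_increasing; auto. subst; lra.
Qed.

Lemma ln_small s : - / 2 <= s -> Rabs (ln (1 + s) - s) <= 2 * s ^ 2.
Proof.
  intros Hs.
  assert (H1 : 0 < 1 + s) by lra.
  pose proof (ln_le_m1 _ H1). pose proof (ln_ge_m1 _ H1).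
  assert (E : 1 - / (1 + s) = s - s ^ 2 / (1 + s)) by (field; lra).
  assert (B : s ^ 2 / (1 + s) <= 2 * s ^ 2).
  { unfold Rdiv. assert (0 <= s^2) by nra.
    assert (/ (1 + s) <= 2).
    { replace 2 with (/ (/ 2)) by field. apply Rinv_le_contravar; lra. }
    nra. }
  assert (0 <= s ^ 2 / (1 + s)) by (apply Rle_mult_inv_pos; nra).
  rewrite Rabs_left1; lra.
Qed.

Definition K0 c M := 2 + 4 * (Rabs (ln c) + ln (1 + M) + M).

Lemma K0_ge c M : 0 <= M -> 2 <= K0 c M.
Proof.
  intros HM. unfold K0.
  pose proof (ln_mono 1 (1 + M) ltac:(lra) ltac:(lra)). rewrite ln_1 in H.
  pose proof (Rabs_pos (ln c)). lra.
Qed.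

Lemma Lg c M s : 0 < c -> 0 <= M -> c <= Rabs (1 + s) -> Rabs (1 + s) <= 1 + M ->
  Rabs s <= M -> Rabs (ln (Rabs (1 + s)) - s) <= K0 c M * s ^ 2.
Proof.
  intros Hc HM H1 H2 H3.
  destruct (Rle_lt_dec (Rabs s) (/ 2)) as [h|h].
  - assert (- / 2 <= s) by (pose proof (Rabs_le_between s (/2)) as [X _]; auto; apply X in h; lra).
    rewrite (Rabs_pos_eq (1 + s)) by lra.
    pose proof (ln_small s H). pose proof (K0_ge c M HM).
    assert (0 <= s^2) by nra. nra.
  - assert (L1 : ln c <= ln (Rabs (1 + s))) by (apply ln_mono; lra).
    assert (L2 : ln (Rabs (1 + s)) <= ln (1 + M)) by (apply ln_mono; lra).
    assert (A : Rabs (ln (Rabs (1 + s))) <= Rabs (ln c) + ln (1 + M)).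
    { pose proof (Rle_abs (- ln c)). rewrite Rabs_Ropp in H.
      pose proof (ln_mono 1 (1 + M) ltac:(lra) ltac:(lra)). rewrite ln_1 in H0.
      pose proof (Rabs_pos (ln c)).
      apply Rabs_le. lra. }
    assert (B : Rabs (ln (Rabs (1 + s)) - s) <= Rabs (ln c) + ln (1 + M) + M).
    { unfold Rminus. eapply Rle_trans; [apply Rabs_triang|]. rewrite Rabs_Ropp. lra. }
    assert (S2 : / 4 < s ^ 2).
    { rewrite <- pow2_abs. assert (0 < / 2) by lra. nra. }
    unfold K0.
    assert (0 <= Rabs (ln c) + ln (1 + M) + M).
    { pose proof (Rabs_pos (ln (Rabs (1 + s) ) - s)). lra. }
    nra.
Qed.

Lemma inv_n_bnd (n : R) : 1 <= n -> Rabs (ln (1 + / n) - / n) <= / n ^ 2.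
Proof.
  intros Hn. assert (0 < / n) by (apply Rinv_0_lt_compat; lra).
  assert (/ n <= 1) by (rewrite <- Rinv_1; apply Rinv_le_contravar; lra).
  assert (H1 : 0 < 1 + / n) by lra.
  pose proof (ln_le_m1 _ H1). pose proof (ln_ge_m1 _ H1).
  assert (E : 1 - / (1 + / n) = / n - (/ n) ^ 2 / (1 + / n)) by (field; lra).
  assert (B : (/ n) ^ 2 / (1 + / n) <= / n ^ 2).
  { rewrite pow_inv. unfold Rdiv. assert (0 < / n ^ 2) by (apply Rinv_0_lt_compat; nra).
    assert (/ (1 + / n) <= 1) by (rewrite <- Rinv_1; apply Rinv_le_contravar; lra).
    nra. }
  assert (0 <= (/ n) ^ 2 / (1 + / n)) by (apply Rle_mult_inv_pos; nra).
  rewrite Rabs_left1; lra.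
Qed.

Lemma sq_sh (n : R) : 1 <= n -> / n ^ 2 <= 4 * / (n + 1) ^ 2.
Proof.
  intros Hn. replace (4 * / (n + 1) ^ 2) with (/ ((n + 1) / 2) ^ 2) by (field; lra).
  apply Rinv_le_contravar. nra. apply pow_incr; lra.
Qed.

Definition Hyp (c M y : R) := Rabs y <= M /\ forall i : nat, c * (INR i + 1) <= Rabs (y + INR i).

Lemma t_bnd (r : nat) (c M : R) : 0 < c -> 0 < M -> exists K, forall y, Hyp c M y ->
  forall i, Rabs (t r i y) <= K * / (INR i + 1) ^ 2.
Proof.
  intros Hc HM.
  destruct r as [|[|r]].
  - exists (Rabs (ln c) + Rabs (ln M) + 4 * (M + K0 c M * M ^ 2)).
    intros y [Hy Hi] i.
    assert (0 <= K0 c M) by (pose proof (K0_ge c M); lra).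
    destruct i as [|j].
    + change (t 0 0 y) with (- ln (Rabs y)). change (INR 0) with 0.
      replace ((0 + 1) ^ 2) with 1 by ring. rewrite Rinv_1, Rmult_1_r.
      specialize (Hi 0%nat). simpl in Hi. rewrite Rplus_0_r in Hi.
      rewrite Rabs_Ropp.
      assert (ln c <= ln (Rabs y)) by (apply ln_mono; lra).
      assert (ln (Rabs y) <= ln M) by (apply ln_mono; lra).
      assert (0 <= M + K0 c M * M ^ 2) by (assert (0 <= M^2) by nra; nra).
      pose proof (Rle_abs (ln M)). pose proof (Rle_abs (- ln c)). rewrite Rabs_Ropp in H4.
      pose proof (Rabs_pos (ln c)). pose proof (Rabs_pos (ln M)).
      apply Rabs_le; lra.
    + unfold t. set (n := INR (S j)). specialize (Hi (S j)). fold n in Hi.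
      assert (Hn : 1 <= n) by (unfold n; rewrite S_INR; pose proof (pos_INR j); lra).
      set (s := y / n).
      assert (Ey : y = n * s) by (unfold s; field; lra).
      assert (Eyn : Rabs (y + n) = n * Rabs (1 + s)).
      { rewrite Ey. replace (n * s + n) with (n * (1 + s)) by ring.
        rewrite Rabs_mult, Rabs_pos_eq by lra. reflexivity. }
      assert (H1s : c <= Rabs (1 + s)).
      { assert (c * (n + 1) <= n * Rabs (1 + s)) by lra.
        assert (c * n <= n * Rabs (1 + s)) by lra. nra. }
      assert (Hs : Rabs s <= M / n).
      { unfold s. unfold Rdiv. rewrite Rabs_mult, (Rabs_pos_eq (/ n)).
        apply Rmult_le_compat_r; [apply Rlt_le, Rinv_0_lt_compat; lra| lra].
        apply Rlt_le, Rinv_0_lt_compat; lra. }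
      assert (HsM : M / n <= M).
      { unfold Rdiv. assert (/ n <= 1) by (rewrite <- Rinv_1; apply Rinv_le_contravar; lra).
        assert (0 < / n) by (apply Rinv_0_lt_compat; lra). nra. }
      assert (H2s : Rabs (1 + s) <= 1 + M).
      { eapply Rle_trans; [apply Rabs_triang|]. rewrite Rabs_R1. lra. }
      pose proof (Lg c M s Hc (Rlt_le _ _ HM) H1s H2s ltac:(lra)) as G.
      assert (Eln : ln (Rabs (y + n)) = ln n + ln (Rabs (1 + s))).
      { rewrite Eyn. apply ln_mult; lra. }
      rewrite Eln.
      replace (ln n + y * ln (1 + / n) - (ln n + ln (Rabs (1 + s))))
        with (y * (ln (1 + / n) - / n) - (ln (Rabs (1 + s)) - s))
        by (unfold s; field; lra).
      pose proof (inv_n_bnd n Hn) as I.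
      assert (T1 : Rabs (y * (ln (1 + / n) - / n)) <= M * / n ^ 2).
      { rewrite Rabs_mult. apply Rmult_le_compat; auto using Rabs_pos. }
      assert (T2 : s ^ 2 <= M ^ 2 * / n ^ 2).
      { rewrite <- pow2_abs. replace (M ^ 2 * / n ^ 2) with ((M / n) ^ 2) by (field; lra).
        apply pow_incr. split; auto using Rabs_pos. }
      assert (T : Rabs (y * (ln (1 + / n) - / n) - (ln (Rabs (1 + s)) - s))
                  <= (M + K0 c M * M ^ 2) * / n ^ 2).
      { unfold Rminus at 1. eapply Rle_trans; [apply Rabs_triang|]. rewrite Rabs_Ropp.
        assert (K0 c M * s ^ 2 <= K0 c M * (M ^ 2 * / n ^ 2)) by (apply Rmult_le_compat_l; lra).
        lra. }
      eapply Rle_trans; [exact T|].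
      pose proof (sq_sh n Hn).
      assert (0 <= M + K0 c M * M ^ 2) by (assert (0 <= M^2) by nra; nra).
      assert (0 <= Rabs (ln c) + Rabs (ln M)) by (pose proof (Rabs_pos (ln c)); pose proof (Rabs_pos (ln M)); lra).
      assert (0 <= / (n + 1) ^ 2) by (apply Rlt_le, Rinv_0_lt_compat; nra).
      nra.
  - exists (/ c + 4 + 2 * M / c).
    intros y [Hy Hi] i.
    assert (0 < / c) by (apply Rinv_0_lt_compat; lra).
    destruct i as [|j].
    + specialize (Hi 0%nat). simpl in Hi. rewrite Rplus_0_r in Hi.
      change (t 1 0 y) with (- / y). change (INR 0) with 0.
      replace ((0 + 1) ^ 2) with 1 by ring. rewrite Rinv_1, Rmult_1_r.
      rewrite Rabs_Ropp, Rabs_inv.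
      assert (/ Rabs y <= / c) by (apply Rinv_le_contravar; lra).
      assert (0 <= M / c) by (apply Rle_mult_inv_pos; lra). lra.
    + unfold t. set (n := INR (S j)). specialize (Hi (S j)). fold n in Hi.
      assert (Hn : 1 <= n) by (unfold n; rewrite S_INR; pose proof (pos_INR j); lra).
      assert (Hyn : y + n <> 0) by (intro E; rewrite E, Rabs_R0 in Hi; nra).
      replace (ln (1 + / n) - / (y + n)) with ((ln (1 + / n) - / n) + y / (n * (y + n)))
        by (field; split; lra).
      eapply Rle_trans; [apply Rabs_triang|].
      pose proof (inv_n_bnd n Hn) as I.
      assert (T2 : Rabs (y / (n * (y + n))) <= M / c * / (n * (n + 1))).
      { unfold Rdiv. rewrite Rabs_mult, Rabs_inv, Rabs_mult, (Rabs_pos_eq n) by lra.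
        rewrite Rmult_assoc. apply Rmult_le_compat; auto using Rabs_pos.
        apply Rlt_le, Rinv_0_lt_compat. apply Rmult_lt_0_compat; [lra|].
        assert (0 < c * (n + 1)) by nra. lra.
        replace (/ c * / (n * (n + 1))) with (/ (n * (c * (n + 1)))) by (field; split; lra).
        apply Rinv_le_contravar. nra. apply Rmult_le_compat_l; lra. }
      assert (T3 : / (n * (n + 1)) <= 2 * / (n + 1) ^ 2).
      { replace (2 * / (n + 1) ^ 2) with (/ ((n + 1) * (n + 1) / 2)) by (field; lra).
        apply Rinv_le_contravar. nra. nra. }
      pose proof (sq_sh n Hn).
      assert (0 <= M / c) by (apply Rle_mult_inv_pos; lra).
      assert (0 <= / (n + 1) ^ 2) by (apply Rlt_le, Rinv_0_lt_compat; nra).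
      assert (M / c * / (n * (n + 1)) <= M / c * (2 * / (n + 1) ^ 2)) by (apply Rmult_le_compat_l; lra).
      unfold Rdiv in *. nra.
  - exists (INR (fact (S r)) / c ^ (S (S r))).
    intros y [Hy Hi] i. specialize (Hi i).
    set (n := INR i) in *. assert (Hn : 0 <= n) by apply pos_INR.
    unfold t. unfold Rdiv. rewrite !Rabs_mult, pow_1_abs, Rmult_1_l, Rabs_inv.
    rewrite (Rabs_pos_eq (INR _)) by apply pos_INR.
    rewrite Rmult_assoc. apply Rmult_le_compat_l; [apply pos_INR|].
    rewrite <- RPow_abs.
    assert (0 < c * (n + 1)) by nra.
    assert (P1 : (c * (n + 1)) ^ S (S r) <= Rabs (y + n) ^ S (S r)) by (apply pow_incr; lra).
    assert (P2 : (n + 1) ^ 2 <= (n + 1) ^ S (S r)) by (apply Rle_pow; [lra| lia]).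
    rewrite <- Rinv_mult.
    apply Rinv_le_contravar.
    + apply Rmult_lt_0_compat; apply pow_lt; nra.
    + rewrite Rpow_mult_distr in P1.
      assert (0 < c ^ S (S r)) by (apply pow_lt; lra).
      fold n. eapply Rle_trans; [|exact P1]; apply Rmult_le_compat_l; lra.
Qed.


Definition z (i : nat) : R := / (INR i + 1) ^ 2.

Lemma inv_INR_lim : is_lim_seq (fun n => / INR n) 0.
Proof.
  replace (Finite 0) with (Rbar_inv p_infty) by reflexivity.
  apply is_lim_seq_inv; [apply is_lim_seq_INR| discriminate].
Qed.

Lemma tele_sum n : sum_f_R0 (fun i => / (INR i + 1) - / (INR i + 2)) n = 1 - / (INR n + 2).
Proof.
  induction n as [|n IH].
  - simpl. field.
  - rewrite tech5, IH, S_INR. pose proof (pos_INR n). field. lra.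
Qed.

Lemma tele_ser : is_series (fun i => / (INR i + 1) - / (INR i + 2)) 1.
Proof.
  apply is_series_Reals. unfold infinite_sum.
  change (Un_cv (sum_f_R0 (fun i => / (INR i + 1) - / (INR i + 2))) 1).
  apply is_lim_seq_Reals.
  apply (is_lim_seq_ext (fun n => 1 - / INR (n + 2)%nat)).
  { intros n. rewrite tele_sum, plus_INR. simpl. replace (1 + 1) with 2 by ring. reflexivity. }
  replace (Finite 1) with (Rbar_minus 1 0) by (simpl; f_equal; ring).
  apply (is_lim_seq_minus _ _ 1 0).
  - apply is_lim_seq_const.
  - apply (is_lim_seq_incr_n (fun n => / INR n) 2). apply inv_INR_lim.
  - unfold is_Rbar_minus, is_Rbar_plus; simpl. reflexivity.
Qed.

Lemma z_ex : ex_series z.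
Proof.
  apply (ex_series_le z (fun i => 2 * (/ (INR i + 1) - / (INR i + 2)))).
  - intros n. unfold norm; simpl. unfold abs; simpl. unfold z.
    pose proof (pos_INR n).
    rewrite Rabs_pos_eq by (apply Rlt_le, Rinv_0_lt_compat; nra).
    replace (2 * (/ (INR n + 1) - / (INR n + 2))) with (/ ((INR n + 1) * (INR n + 2) / 2))
      by (field; lra).
    apply Rinv_le_contravar; nra.
  - apply (ex_series_scal_l 2 (fun i => / (INR i + 1) - / (INR i + 2))).
    eexists; apply tele_ser.
Qed.

Lemma z_pos i : 0 <= z i.
Proof. unfold z. pose proof (pos_INR i). apply Rlt_le, Rinv_0_lt_compat. nra. Qed.

Lemma mtest (a : nat -> R) K : (forall i, Rabs (a i) <= K * z i) ->
  ex_series a /\ forall n, Rabs (Series a - sum_f_R0 a n) <= K * (Series z - sum_f_R0 z n).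
Proof.
  intros Hb.
  assert (Ez : forall n, ex_series (fun k => z (S n + k)%nat)).
  { intros n. apply (ex_series_incr_n z (S n)). apply z_ex. }
  assert (Ea : forall n, ex_series (fun k => Rabs (a (n + k)%nat))).
  { intros n. apply (@ex_series_le R_AbsRing R_CompleteNormedModule _ (fun k => K * z (n + k)%nat)).
    - intros k. unfold norm; simpl. unfold abs; simpl. rewrite Rabs_Rabsolu. apply Hb.
    - apply (ex_series_scal_l K (fun k => z (n + k)%nat)).
      apply (ex_series_incr_n z n). apply z_ex. }
  assert (Ex : ex_series a).
  { apply ex_series_Rabs. apply (ex_series_ext (fun k => Rabs (a (0 + k)%nat))); auto. }
  split; auto.
  intros n.
  rewrite (Series_incr_n a (S n)) by (auto; lia).
  rewrite (Series_incr_n z (S n)) by (auto using z_ex; lia).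
  simpl pred.
  replace (sum_f_R0 a n + Series (fun k => a (S n + k)%nat) - sum_f_R0 a n)
    with (Series (fun k => a (S n + k)%nat)) by ring.
  replace (sum_f_R0 z n + Series (fun k => z (S n + k)%nat) - sum_f_R0 z n)
    with (Series (fun k => z (S n + k)%nat)) by ring.
  eapply Rle_trans; [apply Series_Rabs; apply Ea|].
  rewrite <- Series_scal_l.
  apply Series_le.
  - intros k. split; [apply Rabs_pos| apply Hb].
  - apply (ex_series_scal_l K (fun k => z (S n + k)%nat)). apply Ez.
Qed.

Lemma sum_der (f f' : nat -> R -> R) y n :
  (forall i, is_derive (f i) y (f' i y)) ->
  derivable_pt_lim (fun y => sum_f_R0 (fun i => f i y) n) y (sum_f_R0 (fun i => f' i y) n).
Proof.
  intros H. apply is_derive_Reals.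
  induction n as [|n IH].
  - simpl. apply H.
  - simpl. apply (isd_plus (fun y => sum_f_R0 (fun i => f i y) n) (f (S n))); auto.
Qed.

Lemma sum_cont (f : nat -> R -> R) y n :
  (forall i, continuity_pt (f i) y) ->
  continuity_pt (fun y => sum_f_R0 (fun i => f i y) n) y.
Proof.
  intros H. induction n as [|n IH].
  - simpl. apply H.
  - simpl. apply (continuity_pt_plus (fun y => sum_f_R0 (fun i => f i y) n) (f (S n))); auto.
Qed.

Lemma SerDer (f f' : nat -> R -> R) x rho K K' : 0 < rho ->
  (forall y, Rabs (y - x) < rho -> forall i, is_derive (f i) y (f' i y) /\
     continuous (f' i) y /\ Rabs (f i y) <= K * z i /\ Rabs (f' i y) <= K' * z i) ->
  is_derive (fun y => Series (fun i => f i y)) x (Series (fun i => f' i x)).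
Proof.
  intros Hr H.
  apply is_derive_Reals.
  set (rr := mkposreal rho Hr).
  assert (Hx : Boule x rr x) by (unfold Boule; simpl; rewrite Rminus_eq_0, Rabs_R0; exact Hr).
  assert (HK' : 0 <= K').
  { destruct (H x Hx 0%nat) as [_ [_ [_ B]]]. unfold z in B. simpl in B.
    replace ((0 + 1) * ((0 + 1) * 1)) with 1 in B by ring. rewrite Rinv_1 in B.
    pose proof (Rabs_pos (f' 0%nat x)). lra. }
  assert (CV : CVU (fun n y => sum_f_R0 (fun i => f' i y) n) (fun y => Series (fun i => f' i y)) x rr).
  { intros eps Heps.
    assert (Hz : is_series z (Series z)) by (apply Series_correct, z_ex).
    apply is_series_Reals in Hz.
    destruct (Hz (eps / (K' + 1))) as [N HN].
    { apply Rlt_gt, Rdiv_lt_0_compat; lra. }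
    exists N. intros n y Hn Hy.
    destruct (mtest (fun i => f' i y) K') as [_ T].
    { intros i. apply (H y Hy i). }
    eapply Rle_lt_trans; [apply T|].
    specialize (HN n Hn). unfold Rdist in HN.
    rewrite Rabs_minus_sym in HN.
    pose proof (Rle_abs (Series z - sum_f_R0 z n)).
    apply Rle_lt_trans with ((K' + 1) * Rabs (Series z - sum_f_R0 z n)).
    - assert (0 <= Series z - sum_f_R0 z n).
      { destruct (mtest z 1) as [_ T2]. { intros i. rewrite Rmult_1_l, Rabs_pos_eq; [lra|apply z_pos]. }
        rewrite (Series_incr_n z (S n)) by (auto using z_ex; lia). simpl pred.
        replace (sum_f_R0 z n + Series (fun k => z (S n + k)%nat) - sum_f_R0 z n)
          with (Series (fun k => z (S n + k)%nat)) by ring.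
        replace 0 with (Series (fun k => 0 * z k)) by (rewrite Series_scal_l; ring).
        apply Series_le; [intros k; rewrite Rmult_0_l; split; [lra| apply z_pos]|].
        apply (ex_series_incr_n z (S n)). apply z_ex. }
      rewrite Rabs_pos_eq by auto. nra.
    - replace eps with ((K' + 1) * (eps / (K' + 1))) by (field; lra).
      apply Rmult_lt_compat_l; lra. }
  apply (derivable_pt_lim_CVU (fun n y => sum_f_R0 (fun i => f i y) n)
           (fun n y => sum_f_R0 (fun i => f' i y) n) _ (fun y => Series (fun i => f' i y)) x x rr Hx).
  - intros y n Hy. apply sum_der. intros i. apply (H y Hy i).
  - intros y Hy.
    destruct (mtest (fun i => f i y) K) as [E _]. { intros i. apply (H y Hy i). }
    apply Series_correct, is_series_Reals in E. exact E.
  - exact CV.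
  - intros y Hy. apply (CVU_continuity _ _ x rr CV); auto.
    intros n w Hw. apply sum_cont. intros i. apply continuity_pt_filterlim. apply (H w Hw i).
Qed.


Definition Pf (r : nat) (y : R) : R := Series (fun i => t r i y).

Lemma U_ball x : U x -> exists rho c M, 0 < rho /\ 0 < c /\ 0 < M /\
  forall y, Rabs (y - x) < rho -> Hyp c M y /\ U y.
Proof.
  intros Hx. destruct (geom x Hx) as [rho [c [M [Hr [Hc [HM H]]]]]].
  exists rho, c, M. repeat split; auto.
  - apply H; auto.
  - apply H; auto.
  - intros n E. destruct (H y H0) as [_ Hi]. specialize (Hi n).
    rewrite E in Hi. replace (- INR n + INR n) with 0 in Hi by ring.
    rewrite Rabs_R0 in Hi. pose proof (pos_INR n). nra.
Qed.

Lemma loc_U x (P : R -> Prop) : U x -> (forall y, U y -> P y) -> locally x P.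
Proof.
  intros Hx HP. destruct (U_ball x Hx) as [rho [c [M [Hr [_ [_ H]]]]]].
  exists (mkposreal rho Hr). intros y Hy. apply HP. apply (H y Hy).
Qed.

Lemma DP r x : U x -> is_derive (Pf r) x (Pf (S r) x).
Proof.
  intros Hx. destruct (U_ball x Hx) as [rho [c [M [Hr [Hc [HM H]]]]]].
  destruct (t_bnd r c M Hc HM) as [K HK].
  destruct (t_bnd (S r) c M Hc HM) as [K' HK'].
  unfold Pf. apply (SerDer (t r) (t (S r)) x rho K K' Hr).
  intros y Hy i. destruct (H y Hy) as [Hh Uy].
  split; [|split; [|split]].
  - apply t_der; auto.
  - apply (@ex_derive_continuous R_AbsRing R_NormedModule). exists (t (S (S r)) i y). apply t_der; auto.
  - apply HK; auto.
  - apply HK'; auto.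
Qed.

Lemma prod_nz y n : U y -> prod_f_R0 (fun i => y + INR i) n <> 0.
Proof.
  intros Hy. induction n as [|n IH].
  - simpl. intro E. exact (Hy 0%nat ltac:(simpl; lra)).
  - change (prod_f_R0 (fun i => y + INR i) n * (y + INR (S n)) <> 0).
    apply Rmult_integral_contrapositive. split; auto.
    intro E. exact (Hy (S n) ltac:(lra)).
Qed.

Lemma psum y n : U y ->
  sum_f_R0 (fun i => t 0 i y) n =
  ln (INR (fact n)) + y * ln (INR n + 1) - ln (Rabs (prod_f_R0 (fun i => y + INR i) n)).
Proof.
  intros Hy. induction n as [|n IH].
  - simpl. rewrite Rplus_0_r, Rplus_0_l, ln_1. ring.
  - rewrite tech5, IH.
    change (prod_f_R0 (fun i => y + INR i) (S n)) with
      (prod_f_R0 (fun i => y + INR i) n * (y + INR (S n))).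
    change (t 0 (S n) y) with
      (ln (INR (S n)) + y * ln (1 + / INR (S n)) - ln (Rabs (y + INR (S n)))).
    rewrite fact_simpl, mult_INR.
    assert (H1 : 0 < INR (S n)) by (apply lt_0_INR; lia).
    pose proof (INR_fact_lt_0 n).
    pose proof (prod_nz y n Hy).
    assert (y + INR (S n) <> 0) by (intro E; exact (Hy (S n) ltac:(lra))).
    rewrite Rabs_mult.
    rewrite (ln_mult (Rabs _) (Rabs _)) by (apply Rabs_pos_lt; auto).
    rewrite (ln_mult (INR (S n)) (INR (fact n))) by auto.
    replace (INR (S n) + 1) with (INR (S n) * (1 + / INR (S n))) by (field; lra).
    rewrite (ln_mult (INR (S n))) by (auto; assert (0 < / INR (S n)) by (apply Rinv_0_lt_compat; lra); lra).
    rewrite S_INR. ring.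
Qed.

Lemma ser_t0 y : U y -> ex_series (fun i => t 0 i y).
Proof.
  intros Hy. destruct (U_ball y Hy) as [rho [c [M [Hr [Hc [HM H]]]]]].
  destruct (t_bnd 0 c M Hc HM) as [K HK].
  assert (Hh : Hyp c M y) by (apply H; rewrite Rminus_eq_0, Rabs_R0; auto).
  destruct (mtest (fun i => t 0 i y) K) as [E _]; auto.
Qed.

Definition P (y : R) (n : nat) := prod_f_R0 (fun i => y + INR i) n.

Lemma ln1_lim : is_lim_seq (fun n => ln (1 + / INR n)) 0.
Proof.
  assert (C : continuity_pt ln 1).
  { apply derivable_continuous_pt. exists (/ 1). apply derivable_pt_lim_ln. lra. }
  rewrite <- ln_1.
  apply (is_lim_seq_continuous ln (fun n => 1 + / INR n) 1 C).
  assert (L : is_lim_seq (fun n => 1 + / INR n) (1 + 0)).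
  { apply is_lim_seq_plus'. apply is_lim_seq_const. apply inv_INR_lim. }
  rewrite Rplus_0_r in L. exact L.
Qed.

Lemma F_eq y : U y -> ln (Rabs (Gamma y)) = Pf 0 y.
Proof.
  intros Hy.
  assert (Hs : is_lim_seq (fun n => sum_f_R0 (fun i => t 0 i y) n) (Pf 0 y)).
  { apply is_lim_seq_Reals. pose proof (Series_correct _ (ser_t0 y Hy)) as E.
    apply is_series_Reals in E. exact E. }
  assert (Hab : forall n, (1 <= n)%nat ->
     Rabs (INR (fact n) * Rpower (INR n) y / P y n) =
     exp (sum_f_R0 (fun i => t 0 i y) n - y * ln (1 + / INR n))).
  { intros n Hn. rewrite psum by auto.
    assert (Hn0 : 0 < INR n) by (apply lt_0_INR; lia).
    assert (0 < / INR n) by (apply Rinv_0_lt_compat; lra).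
    replace (INR n + 1) with (INR n * (1 + / INR n)) by (field; lra).
    rewrite ln_mult by lra.
    replace (ln (INR (fact n)) + y * (ln (INR n) + ln (1 + / INR n)) -
             ln (Rabs (prod_f_R0 (fun i => y + INR i) n)) - y * ln (1 + / INR n))
      with (ln (INR (fact n)) + y * ln (INR n) + - ln (Rabs (P y n))) by (unfold P; ring).
    rewrite !exp_plus, exp_Ropp.
    pose proof (INR_fact_lt_0 n). pose proof (prod_nz y n Hy) as Pn. fold (P y n) in Pn.
    rewrite !exp_ln by (auto; apply Rabs_pos_lt; auto).
    unfold Rdiv. rewrite !Rabs_mult, Rabs_inv.
    rewrite (Rabs_pos_eq (INR _)) by lra.
    unfold Rpower. rewrite (Rabs_pos_eq (exp _)) by (apply Rlt_le, exp_pos). reflexivity. }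
  assert (Hl : is_lim_seq (fun n => exp (sum_f_R0 (fun i => t 0 i y) n - y * ln (1 + / INR n)))
                 (exp (Pf 0 y))).
  { apply is_lim_seq_continuous.
    - apply derivable_continuous_pt, derivable_pt_exp.
    - assert (L : is_lim_seq (fun n => sum_f_R0 (fun i => t 0 i y) n - y * ln (1 + / INR n))
                   (Pf 0 y - y * 0)).
      { apply is_lim_seq_minus'; auto.
        apply is_lim_seq_mult'. apply is_lim_seq_const. apply ln1_lim. }
      replace (Pf 0 y - y * 0) with (Pf 0 y) in L by ring. exact L. }
  destruct (INR_unbounded (- y)) as [N HN].
  set (s := Rabs (P y N) / P y N).
  pose proof (prod_nz y N Hy) as PN. fold (P y N) in PN.
  assert (Hinv : forall k, Rabs (P y (N + k)) / P y (N + k) = s).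
  { induction k as [|k IH].
    - rewrite Nat.add_0_r. reflexivity.
    - rewrite Nat.add_succ_r.
      change (P y (S (N + k))) with (P y (N + k) * (y + INR (S (N + k)))).
      assert (INR N <= INR (S (N + k))) by (apply le_INR; lia).
      assert (0 < y + INR (S (N + k))) by lra.
      pose proof (prod_nz y (N + k) Hy) as Pk. fold (P y (N + k)) in Pk.
      rewrite Rabs_mult, (Rabs_pos_eq (y + _)) by lra.
      rewrite <- IH. field. lra. }
  assert (Hg : forall n, (N + 1 <= n)%nat ->
     exp (sum_f_R0 (fun i => t 0 i y) n - y * ln (1 + / INR n)) * s =
     INR (fact n) * Rpower (INR n) y / P y n).
  { intros n Hn. rewrite <- Hab by lia.
    replace n with (N + (n - N))%nat by lia. rewrite <- (Hinv (n - N)%nat).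
    pose proof (prod_nz y (N + (n - N)) Hy) as Pk. fold (P y (N + (n - N))) in Pk.
    set (Q := P y (N + (n - N))) in *.
    set (a := INR (fact (N + (n - N))) * Rpower (INR (N + (n - N))) y).
    unfold Rdiv. rewrite Rabs_mult, Rabs_inv.
    assert (0 < a).
    { unfold a. apply Rmult_lt_0_compat. apply INR_fact_lt_0. apply exp_pos. }
    rewrite Rabs_pos_eq by lra.
    assert (0 < Rabs Q) by (apply Rabs_pos_lt; auto).
    field. split; lra. }
  assert (HG : is_lim_seq (fun n => INR (fact n) * Rpower (INR n) y / P y n) (exp (Pf 0 y) * s)).
  { apply (is_lim_seq_ext_loc (fun n => exp (sum_f_R0 (fun i => t 0 i y) n - y * ln (1 + / INR n)) * s)).
    - exists (N + 1)%nat. apply Hg.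
    - apply is_lim_seq_mult'; auto. apply is_lim_seq_const. }
  unfold Gamma. unfold P in HG.
  rewrite (is_lim_seq_unique _ _ HG). simpl.
  assert (Hs1 : Rabs s = 1).
  { unfold s, Rdiv. rewrite Rabs_mult, Rabs_inv, Rabs_Rabsolu. apply Rinv_r.
    apply Rabs_no_R0; auto. }
  rewrite Rabs_mult, Hs1, Rmult_1_r, Rabs_pos_eq by (apply Rlt_le, exp_pos).
  apply ln_exp.
Qed.

Definition FF (t : R) : R := ln (Rabs (Gamma t)).

Lemma Dn r y : U y -> Derive_n FF r y = Pf r y.
Proof.
  revert y. induction r as [|r IH]; intros y Hy.
  - simpl. apply F_eq; auto.
  - simpl. rewrite (Derive_ext_loc _ (Pf r)).
    + apply is_derive_unique. apply DP; auto.
    + apply loc_U; auto.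
Qed.

Lemma pg_der n x : U x -> is_derive (polygamma n) x (polygamma (S n) x).
Proof.
  intros Hx.
  apply (is_derive_ext_loc (Pf (S n))).
  - apply loc_U; auto. intros y Hy. unfold polygamma. symmetry. apply (Dn (S n) y Hy).
  - unfold polygamma. change (Derive_n (fun t => ln (Rabs (Gamma t))) (S (S n)) x)
      with (Derive_n FF (S (S n)) x). rewrite Dn by auto. apply DP; auto.
Qed.


Lemma isd_scal (f : R -> R) x a c : is_derive f x a -> is_derive (fun z => c * f z) x (c * a).
Proof. intros H. apply (is_derive_scal f x c a H). Qed.

Lemma pg_aff j a b m y : y = a * m + b -> U y ->
  is_derive (fun x => polygamma j (a * x + b)) m (a * polygamma (S j) y).
Proof.
  intros E Hy. subst y.
  pose proof (is_derive_comp (polygamma j) (fun x => a * x + b) m _ a (pg_der j _ Hy)) as D.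
  apply D. auto_derive; auto. ring.
Qed.

Lemma part1 k j m : (1 <= j)%nat -> admissible k m ->
  is_derive (Dlt k j) m (- Dlt k (S j) m).
Proof.
  intros Hj Ha. destruct j as [|j]; [lia|].
  assert (U1 : U (2 * m + 1)) by (intros n; apply (Ha n)).
  assert (U2 : U (m + 1 + k)) by (intros n; apply (Ha n)).
  assert (U3 : U (m + 1 - k)) by (intros n; apply (Ha n)).
  unfold Dlt. replace (S j - 1)%nat with j by lia. replace (S (S j) - 1)%nat with (S j) by lia.
  apply (is_derive_ext (fun x => (-1) ^ S j * (2 ^ S j * polygamma j (2 * x + 1)
              - polygamma j (1 * x + (1 + k)) - polygamma j (1 * x + (1 - k))))).
  { intros x. f_equal. f_equal. f_equal. f_equal. ring. f_equal. ring. }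
  replace (- ((-1) ^ S (S j) * (2 ^ S (S j) * polygamma (S j) (2 * m + 1) -
           polygamma (S j) (m + 1 + k) - polygamma (S j) (m + 1 - k))))
    with ((-1) ^ S j * (2 ^ S j * (2 * polygamma (S j) (2 * m + 1)) -
           1 * polygamma (S j) (m + 1 + k) - 1 * polygamma (S j) (m + 1 - k)))
    by (simpl; ring).
  apply isd_scal. apply isd_minus. apply isd_minus.
  - apply isd_scal. apply pg_aff; auto.
  - apply pg_aff; auto. ring.
  - apply pg_aff; auto. ring.
Qed.


Lemma C_n0 n : Binomial.C n 0 = 1.
Proof. unfold Binomial.C. rewrite Nat.sub_0_r. simpl. pose proof (INR_fact_lt_0 n). field. lra. Qed.

Lemma C_nn n : Binomial.C n n = 1.
Proof. unfold Binomial.C. rewrite Nat.sub_diag. simpl. pose proof (INR_fact_lt_0 n). field. lra. Qed.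

Lemma C_abs n l : (l <= n)%nat -> INR (S l) * Binomial.C (S n) (S l) = INR (S n) * Binomial.C n l.
Proof.
  intros H. unfold Binomial.C. change (S n - S l)%nat with (n - l)%nat.
  rewrite !fact_simpl, !mult_INR.
  pose proof (INR_fact_lt_0 n). pose proof (INR_fact_lt_0 l). pose proof (INR_fact_lt_0 (n - l)).
  assert (0 < INR (S l)) by (apply lt_0_INR; lia).
  field. lra.
Qed.

Lemma sum_shift (f : nat -> R) n : sum_f_R0 f (S n) = f 0%nat + sum_f_R0 (fun l => f (S l)) n.
Proof.
  induction n as [|n IH].
  - simpl. ring.
  - rewrite tech5, IH, tech5. ring.
Qed.

Lemma alg (a x : nat -> R) (x1 : x 1%nat = 0) (xr : forall p, x (S (S p)) =
  sum_f_R0 (fun l => Binomial.C (S p) l * a (S (S p) - l)%nat * x l) p) n :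
  sum_f_R0 (fun l => Binomial.C (S n) l *
     ((- a (S (S (S n) - l))) * x l + a (S (S n) - l)%nat * (- x (S l) + INR l * a 2%nat * x (l - 1)%nat))) n
  = - x (S (S (S n))) + INR (S (S n)) * a 2%nat * x (S n).
Proof.
  set (T1 := sum_f_R0 (fun l => Binomial.C (S n) l * a (S (S (S n) - l)) * x l) n).
  set (T2 := sum_f_R0 (fun l => Binomial.C (S n) l * a (S (S n) - l)%nat * x (S l)) n).
  set (T3 := sum_f_R0 (fun l => Binomial.C (S n) l * INR l * a (S (S n) - l)%nat * x (l - 1)%nat) n).
  assert (E : sum_f_R0 (fun l => Binomial.C (S n) l *
     ((- a (S (S (S n) - l))) * x l + a (S (S n) - l)%nat * (- x (S l) + INR l * a 2%nat * x (l - 1)%nat))) n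
     = - T1 - T2 + a 2%nat * T3).
  { unfold T1, T2, T3.
    replace (- sum_f_R0 (fun l => Binomial.C (S n) l * a (S (S (S n) - l)) * x l) n -
      sum_f_R0 (fun l => Binomial.C (S n) l * a (S (S n) - l)%nat * x (S l)) n +
      a 2%nat * sum_f_R0 (fun l => Binomial.C (S n) l * INR l * a (S (S n) - l)%nat * x (l - 1)%nat) n)
    with ((a 2%nat * sum_f_R0 (fun l => Binomial.C (S n) l * INR l * a (S (S n) - l)%nat * x (l - 1)%nat) n
      - sum_f_R0 (fun l => Binomial.C (S n) l * a (S (S (S n) - l)) * x l) n) -
      sum_f_R0 (fun l => Binomial.C (S n) l * a (S (S n) - l)%nat * x (S l)) n) by ring.
    rewrite scal_sum, <- !minus_sum.
    apply sum_eq. intros i _. ring. }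
  rewrite E. clear E.
  assert (X3 : x (S (S (S n))) = T1 + a 2%nat * x (S n) + T2).
  { rewrite xr. rewrite sum_shift.
    assert (S1 : sum_f_R0 (fun l => Binomial.C (S (S n)) (S l) * a (S (S (S n)) - S l)%nat * x (S l)) n
      = T2 + sum_f_R0 (fun l => Binomial.C (S n) (S l) * a (S (S n) - l)%nat * x (S l)) n).
    { unfold T2. rewrite <- plus_sum. apply sum_eq. intros i Hi.
      rewrite <- pascal by lia. change (S (S (S n)) - S i)%nat with (S (S n) - i)%nat. ring. }
    rewrite S1.
    assert (S2 : T1 = Binomial.C (S n) 0 * a (S (S (S n))) * x 0%nat
       + sum_f_R0 (fun l => Binomial.C (S n) (S l) * a (S (S n) - l)%nat * x (S l)) n
       - a 2%nat * x (S n)).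
    { assert (Q : sum_f_R0 (fun l => Binomial.C (S n) l * a (S (S (S n) - l)) * x l) (S n)
                  = T1 + a 2%nat * x (S n)).
      { unfold T1. rewrite tech5. rewrite C_nn.
        replace (S (S (S n) - S n)) with 2%nat by lia. ring. }
      rewrite sum_shift in Q.
      rewrite <- (sum_eq (fun l => Binomial.C (S n) (S l) * a (S (S (S n) - S l)) * x (S l))) .
      - change (S (S (S n) - 0)) with (S (S (S n))) in Q. lra.
      - intros i Hi. replace (S (S (S n) - S i)) with (S (S n) - i)%nat by lia. reflexivity. }
    rewrite S2. rewrite !C_n0. change (S (S (S n)) - 0)%nat with (S (S (S n))). ring. }
  assert (X4 : T3 = INR (S n) * x (S n)).
  { unfold T3. destruct n as [|n'].
    - simpl. rewrite x1. ring.
    - rewrite sum_shift. simpl INR at 1. rewrite Rmult_0_r, !Rmult_0_l, Rplus_0_l.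
      rewrite (xr n'). rewrite scal_sum. apply sum_eq. intros i Hi.
      replace (S i - 1)%nat with i by lia.
      replace (S (S (S n')) - S i)%nat with (S (S n') - i)%nat by lia.
      rewrite (Rmult_comm (Binomial.C (S (S n')) (S i)) (INR (S i))).
      rewrite C_abs by lia. ring. }
  rewrite X3, X4. rewrite !S_INR. ring.
Qed.


Lemma xs_len k n m : length (xs k n m) = S n.
Proof.
  induction n as [|n IH]; [reflexivity|].
  cbn [xs]. rewrite length_app, IH. simpl. lia.
Qed.

Lemma xs_pref k n m l : (l <= n)%nat -> nth l (xs k n m) 0 = xseq k l m.
Proof.
  induction n as [|n IH]; intros H.
  - assert (l = 0%nat) by lia. subst. reflexivity.
  - destruct (Nat.eq_dec l (S n)) as [->|Hne]; [reflexivity|].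
    cbn [xs]. rewrite app_nth1 by (rewrite xs_len; lia). apply IH. lia.
Qed.

Lemma xseq_S k n m : xseq k (S n) m = xnext k (S n) m (xs k n m).
Proof.
  unfold xseq. cbn [xs]. rewrite app_nth2 by (rewrite xs_len; lia).
  rewrite xs_len, Nat.sub_diag. reflexivity.
Qed.

Lemma xrec k p m : xseq k (S (S p)) m =
  sum_f_R0 (fun l => Binomial.C (S p) l * Dlt k (S (S p) - l) m * xseq k l m) p.
Proof.
  rewrite xseq_S. unfold xnext. apply sum_eq. intros i Hi.
  rewrite xs_pref by lia. reflexivity.
Qed.

Lemma isd_mult (f g : R -> R) x a b : is_derive f x a -> is_derive g x b ->
  is_derive (fun z => f z * g z) x (a * g x + f x * b).
Proof.
  intros Hf Hg. apply (is_derive_mult f g x a b Hf Hg). intros; apply Rmult_comm.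
Qed.

Lemma sum_derb (f f' : nat -> R -> R) y n :
  (forall i, (i <= n)%nat -> is_derive (f i) y (f' i y)) ->
  is_derive (fun y => sum_f_R0 (fun i => f i y) n) y (sum_f_R0 (fun i => f' i y) n).
Proof.
  intros H. induction n as [|n IH].
  - simpl. apply H. lia.
  - simpl. apply (isd_plus (fun y => sum_f_R0 (fun i => f i y) n) (f (S n))).
    apply IH. intros; apply H; lia. apply H; lia.
Qed.

Definition Dx k j m := - xseq k (S j) m + INR j * Dlt k 2 m * xseq k (j - 1) m.

Lemma part2 k : forall N j m, (j <= N)%nat -> admissible k m -> is_derive (xseq k j) m (Dx k j m).
Proof.
  induction N as [|N IH]; intros j m Hj Ha.
  - assert (j = 0%nat) by lia. subst. unfold Dx.
    replace (- xseq k 1 m + INR 0 * Dlt k 2 m * xseq k (0 - 1) m) with 0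
      by (simpl; unfold xseq; simpl; ring).
    apply (is_derive_ext (fun _ => 1)). { intros; reflexivity. }
    auto_derive; auto; ring.
  - destruct (Nat.le_gt_cases j N) as [Hle|Hgt]; [apply IH; auto|].
    assert (j = S N) by lia. subst j. clear Hj Hgt.
    destruct N as [|n].
    + assert (E : Dx k 1 m = 0).
      { unfold Dx. rewrite xrec. simpl sum_f_R0. rewrite C_n0.
        change (xseq k 0 m) with 1. change (xseq k (1 - 1) m) with 1. change (2 - 0)%nat with 2%nat.
        simpl. ring. }
      rewrite E.
      apply (is_derive_ext (fun _ => 0)). { intros; reflexivity. }
      auto_derive; auto.
    + apply (is_derive_ext (fun x => sum_f_R0 (fun l => Binomial.C (S n) l * Dlt k (S (S n) - l) x * xseq k l x) n)).
      { intros x. symmetry. apply xrec. }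
      set (a := fun i => Dlt k i m). set (x := fun l => xseq k l m).
      assert (HA := alg a x eq_refl (fun p => xrec k p m) n).
      unfold Dx. replace (S (S n) - 1)%nat with (S n) by lia.
      fold (x (S (S (S n)))). fold (x (S n)). fold (a 2%nat).
      rewrite <- HA.
      apply (sum_derb (fun l y => Binomial.C (S n) l * Dlt k (S (S n) - l) y * xseq k l y)
        (fun l y => Binomial.C (S n) l * ((- Dlt k (S (S (S n) - l)) y) * xseq k l y
            + Dlt k (S (S n) - l)%nat y * Dx k l y))).
      intros i Hi.
      apply (is_derive_ext (fun y => Binomial.C (S n) i * (Dlt k (S (S n) - i) y * xseq k i y))).
      { intros t. symmetry. apply Rmult_assoc. }
      apply isd_scal. apply isd_mult.
      * apply part1; auto. lia.
      * apply IH; [lia|auto].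
Qed.


Theorem lemma1 (k : R) :
  (forall (j : nat) (m : R), (1 <= j)%nat -> admissible k m ->
     is_derive (Dlt k j) m (- Dlt k (S j) m)) /\
  (forall (j : nat) (m : R), admissible k m ->
     is_derive (xseq k j) m
       (- xseq k (S j) m + INR j * Dlt k 2 m * xseq k (j - 1) m)).
Proof.
  split.
  - intros j m Hj Ha. apply part1; auto.
  - intros j m Ha. exact (part2 k j j m (le_n j) Ha).
Qed.
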